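(* Let $(X,d)$ be a metric space, $\mu$ a non-atomic Borel measure on $X$, $m$ a Borel measure on $X$ and $0<p<\infty$. If $f:X\to\mathbb R$ is $ACC_p$ and $f=0$ $m$-almost everywhere, then the family $\Gamma=\{\gamma\in\Gamma^\mu: f\circ\gamma\not\equiv0\}$ has $\mathrm{Mod}_p(\Gamma)=0$.
   Context: A path is a continuous map $\gamma:[a,b]\to X$; a subpath is a restriction to a subinterval, trivial if that interval is a point; $\mathrm{Im}(\gamma)=\gamma([a,b])$. $\mu$ non-atomic: $\mu(\{x\})=0$ for all $x$. $\Gamma^\mu$ is the set of all non-trivial injective paths $\gamma$ with $0<\mu(\mathrm{Im}(\tilde\gamma))<\infty$ for every non-trivial subpath $\tilde\gamma$. For Borel $g\ge0$, $\int_\gamma g:=\int_{\mathrm{Im}(\gamma)}g\,d\mu$. For $\gamma:[a,b]\to X$ in $\Gamma^\mu$, $h(\gamma)=\mu(\mathrm{Im}(\gamma))$, $\nu_\gamma(x)=\mu(\gamma([a,x]))$ (a bijection $[a,b]\to[0,h(\gamma)]$) and $\gamma_h=\gamma\circ\nu_\gamma^{-1}$. For $\Gamma\subset\Gamma^\mu$, $\mathrm{Mod}_p(\Gamma)=\inf\int_Xg^p\,dm$ over Borel $g\ge0$ with $\int_\gamma g\ge1$ for all $\gamma\in\Gamma$. $f$ is $ACC_p$ if $f\circ\gamma_h$ is absolutely continuous on $[0,h(\gamma)]$ for all $\gamma\in\Gamma^\mu$ outside a family of $p$-modulus zero. *)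

(* Defs.v *)
From HB Require Import structures.
From mathcomp Require Import all_boot all_order all_algebra.
From mathcomp Require Import all_classical all_reals all_analysis measurable_realfun.
Set Implicit Arguments. Unset Strict Implicit. Unset Printing Implicit Defensive.
Import Order.TTheory GRing.Theory Num.Theory.
Import numFieldNormedType.Exports.
Local Open Scope classical_set_scope.
Local Open Scope ring_scope.

Notation Borel X := (g_sigma_algebraType (@open X)).

Section Defs.
Context {R : realType} {X : pseudoPMetricType R}.

(* A (candidate) cpath gamma : [pa, pb] -> X, given by a function on R
   of which only the restriction to [pa, pb] matters. *)
Record cpath := CPath { pa : R; pb : R; pf : R -> X }.

Definition Im (g : cpath) : set X := pf g @` `[pa g, pb g].

Definition GammaMu (mu : {measure set (Borel X) -> \bar R}) : set cpath :=
  [set g | pa g < pb g /\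
     {within `[pa g, pb g], continuous (pf g)} /\
     set_inj `[pa g, pb g] (pf g) /\
     (forall c d, pa g <= c -> c < d -> d <= pb g ->
        (0 < mu (pf g @` `[c, d]) < +oo)%E)].

Definition line_int (mu : {measure set (Borel X) -> \bar R})
  (gam : cpath) (g : Borel X -> \bar R) : \bar R :=
  (\int[mu]_(x in Im gam) g x)%E.

Definition admissible (mu : {measure set (Borel X) -> \bar R})
  (Gam : set cpath) (g : Borel X -> \bar R) : Prop :=
  measurable_fun setT g /\ (forall x, (0 <= g x)%E) /\
  (forall gam, Gam gam -> (1 <= line_int mu gam g)%E).

Definition Mod (p : R) (mu m : {measure set (Borel X) -> \bar R})
  (Gam : set cpath) : \bar R :=
  ereal_inf [set (\int[m]_x (g x `^ p))%E | g in admissible mu Gam].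

Definition hgt (mu : {measure set (Borel X) -> \bar R}) (g : cpath) : R :=
  fine (mu (Im g)).
Definition nu (mu : {measure set (Borel X) -> \bar R}) (g : cpath) (x : R) : R :=
  fine (mu (pf g @` `[pa g, x])).

(* gamma_h = gamma o nu_gamma^{-1} (nu_gamma : [a,b] -> [0,h] is a bijection
   for gamma in Gamma^mu; the inverse is taken by choice) *)
Definition gamma_h (mu : {measure set (Borel X) -> \bar R}) (g : cpath)
  (t : R) : X :=
  pf g (xget (pa g) [set x | pa g <= x <= pb g /\ nu mu g x = t]).

Definition abs_cont (a b : R) (F : R -> R) : Prop :=
  forall e : R, 0 < e -> exists2 d : R, 0 < d &
    forall (n : nat) (I : 'I_n -> R * R),
      (forall i, a <= (I i).1 /\ (I i).1 <= (I i).2 /\ (I i).2 <= b) ->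
      (forall i j, i != j -> (I i).2 <= (I j).1 \/ (I j).2 <= (I i).1) ->
      \sum_(i < n) ((I i).2 - (I i).1) < d ->
      \sum_(i < n) `|F (I i).2 - F (I i).1| < e.

Definition ACC (p : R) (mu m : {measure set (Borel X) -> \bar R})
  (f : X -> R) : Prop :=
  exists Gam0 : set cpath, Gam0 `<=` GammaMu mu /\ Mod p mu m Gam0 = 0%E /\
    forall g, GammaMu mu g -> ~ Gam0 g ->
      abs_cont 0 (hgt mu g) (f \o gamma_h mu g).

End Defs.

(* Main.v *)
Set Warnings "-all".
Require Import Defs.
From HB Require Import structures.
From mathcomp Require Import all_boot all_order all_algebra.
From mathcomp Require Import all_classical all_reals all_analysis measurable_realfun.
Import Order.TTheory GRing.Theory Num.Theory.
Import numFieldNormedType.Exports.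
Local Open Scope classical_set_scope.
Local Open Scope ring_scope.

Lemma closed_Borel (R : realType) (X : pseudoPMetricType R) (A : set X) :
  closed A -> measurable (A : set (Borel X)).
Proof.
move=> cA.
rewrite -[A]setCK; apply: measurableC.
apply: sub_sigma_algebra.
exact: closed_openC.
Qed.

Lemma img_meas (R : realType) (X : pseudoPMetricType R) (hX : hausdorff_space X)
  (g : cpath) c d : {within `[pa g, pb g], continuous (pf g)} ->
  pa g <= c -> d <= pb g ->
  measurable ((pf g @` `[c, d]) : set (Borel X)).
Proof.
move=> cg ac db; apply: closed_Borel; apply: compact_closed => //.
apply: continuous_compact; last exact: segment_compact.
apply: continuous_subspaceW cg => x /=; rewrite !in_itv/= => /andP[h1 h2].
by rewrite (le_trans ac h1) (le_trans h2 db).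
Qed.

Set Implicit Arguments. Unset Strict Implicit.
Section Curve.
Variables (R : realType) (X : pseudoPMetricType R) (hX : hausdorff_space X)
  (mu : {measure set (Borel X) -> \bar R})
  (mu0 : forall x : X, mu [set x] = 0%E) (g : @cpath R X)
  (Gg : GammaMu mu g).

Local Notation a := (pa g).
Local Notation b := (pb g).
Local Notation G := (pf g).
Local Notation M c d := (mu (G @` `[c, d])).

Lemma ab : a < b. Proof. by case: Gg. Qed.
Lemma Gcont : {within `[a, b], continuous G}. Proof. by case: Gg => _ []. Qed.
Lemma Ginj : set_inj `[a, b] G. Proof. by case: Gg => _ [_ []]. Qed.
Lemma Gpos c d : a <= c -> c < d -> d <= b -> (0 < M c d < +oo)%E.
Proof. by case: Gg => _ [_ [_ H]]; exact: H. Qed.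

Lemma subI c d c' d' : c' <= c -> d <= d' -> G @` `[c, d] `<=` G @` `[c', d'].
Proof.
move=> h1 h2 z [y]; rewrite /= !in_itv /= => /andP[y1 y2] <-.
by exists y => //=; rewrite in_itv /= (le_trans h1 y1) (le_trans y2 h2).
Qed.

Lemma mimg c d : a <= c -> d <= b -> measurable (G @` `[c, d] : set (Borel X)).
Proof. by move=> h1 h2; exact: (@img_meas R X hX g c d Gcont h1 h2). Qed.

Lemma finM c d : a <= c -> d <= b -> (M c d < +oo)%E.
Proof.
move=> h1 h2; apply: (le_lt_trans (y := M a b)).
  by apply: le_measure; rewrite ?inE; [exact: mimg|exact: mimg|exact: subI].
by case/andP: (Gpos (lexx a) ab (lexx b)).
Qed.

Lemma M0 c d : (0 <= M c d)%E. Proof. exact: measure_ge0. Qed.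

Definition nuv x := fine (M a x).

Lemma nuvE x : a <= x -> x <= b -> (M a x = (nuv x)%:E).
Proof. move=> h1 h2; rewrite /nuv fineK // ge0_fin_numE ?M0 //; exact: finM. Qed.

Lemma nuv_ge0 x : 0 <= nuv x. Proof. exact: fine_ge0 (M0 _ _). Qed.

Lemma nuv_sub x y : a <= x -> x <= y -> y <= b ->
  nuv y <= nuv x + fine (M x y).
Proof.
move=> ax xy yb.
have h := measureU2 mu (mimg (lexx a) (le_trans xy yb)) (mimg ax yb).
have : (M a y <= M a x + M x y)%E.
  apply: le_trans h; apply: le_measure; rewrite ?inE.
  - exact: mimg.
  - by apply: measurableU; [apply: mimg (le_trans xy yb)|apply: mimg].
  move=> w [z]; rewrite /= in_itv /= => /andP[z1 z2] <-.
  case: (leP z x) => zx; [left|right]; exists z => //=; rewrite in_itv /= ?z1 ?zx ?z2 //.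
  by rewrite andbT ltW.
rewrite (nuvE (le_trans ax xy) yb) (nuvE ax (le_trans xy yb)).
have fxy : M x y = (fine (M x y))%:E.
  by rewrite fineK // ge0_fin_numE ?M0 //; exact: finM.
by rewrite {1}fxy -EFinD lee_fin.
Qed.

Lemma nuv_lt x y : a <= x -> x < y -> y <= b -> nuv x < nuv y.
Proof.
move=> ax xy yb.
set m := (x + y) / 2.
have xm : x < m by rewrite /m midf_lt.
have my : m < y by rewrite /m midf_lt.
have mA := mimg (lexx a) (le_trans (ltW xy) yb).
have mB := mimg (le_trans ax (ltW xm)) yb.
have disj : G @` `[a, x] `&` G @` `[m, y] = set0.
  apply/seteqP; split => // z [[u /= hu <-] [v /= hv]].
  move=> e; move: hu hv; rewrite !in_itv /= => /andP[u1 u2] /andP[v1 v2].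
  have uv : u = v.
    apply: Ginj => //; rewrite inE /= in_itv /=.
      by rewrite u1 (le_trans u2 (le_trans (ltW xy) yb)).
    by rewrite (le_trans ax (le_trans (ltW xm) v1)) (le_trans v2 yb).
  by move: (lt_le_trans (le_lt_trans u2 xm) v1); rewrite uv ltxx.
have hU := measureU mu mA mB disj.
have le : (mu (G @` `[a, x] `|` G @` `[m, y]) <= M a y)%E.
  apply: le_measure; rewrite ?inE; first exact: measurableU.
    exact: mimg.
  move=> z [] [u /=]; rewrite in_itv /= => /andP[u1 u2] <-; exists u => //=;
    rewrite in_itv /=.
    by rewrite u1 (le_trans u2 (ltW xy)).
  by rewrite u2 (le_trans ax (le_trans (ltW xm) u1)).
have [pos _] := andP (Gpos (le_trans ax (ltW xm)) my yb).
rewrite -lte_fin -(nuvE ax (le_trans (ltW xy) yb)) -(nuvE (le_trans ax (ltW xy)) yb).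
apply: lt_le_trans le; rewrite hU lteDl //.
by rewrite ge0_fin_numE ?M0 //; exact: finM (le_trans (ltW xy) yb).
Qed.


Lemma gh_nuv y : a <= y -> y <= b -> gamma_h mu g (nuv y) = G y.
Proof.
move=> ay yb; rewrite /gamma_h.
set P := [set x | _].
have : P (xget a P) by apply: xgetPex; exists y; split => //; rewrite ay yb.
case=> /andP[h1 h2] e.
congr G.
case: (ltgtP (xget a P) y) => // hl.
- by move: (nuv_lt h1 hl yb); rewrite -e /nuv ltxx.
- by move: (nuv_lt ay hl h2); rewrite -e /nuv ltxx.
Qed.

Lemma hgtE : hgt mu g = nuv b. Proof. by []. Qed.

Definition Fs x (n : nat) := G @` `[Num.max a (x - n.+1%:R^-1), Num.min b (x + n.+1%:R^-1)].

Lemma Fs_ab x n : a <= Num.max a (x - n.+1%:R^-1) /\ Num.min b (x + n.+1%:R^-1) <= b.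
Proof. by rewrite le_max lexx ge_min lexx. Qed.

Lemma small x e : a <= x -> x <= b -> 0 < e -> exists n : nat,
  (mu (Fs x n) < e%:E)%E.
Proof.
move=> ax xb e0.
have mF n : measurable (Fs x n : set (Borel X)).
  by have [h1 h2] := Fs_ab x n; exact: mimg.
have capE : \bigcap_n Fs x n = [set G x].
  apply/seteqP; split => z.
    move=> Hz; have [y0 hy0 e0'] := Hz 0%N (I : setT 0%N).
    rewrite -e0'.
    have [h1 h2] := Fs_ab x 0%N.
    move: hy0; rewrite /= in_itv /= => /andP[y1 y2].
    have y0a : a <= y0 := le_trans h1 y1.
    have y0b : y0 <= b := le_trans y2 h2.
    apply/esym; congr G.
    apply/eqP; apply: contraT => nxy.
    have : 0 < `|y0 - x| by rewrite normr_gt0 subr_eq0 eq_sym.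
    move=> /ltr_add_invr [k]; rewrite add0r => hk.
    have [yk hyk ek] := Hz k (I : setT k).
    have [h1' h2'] := Fs_ab x k.
    move: hyk; rewrite /= in_itv /= => /andP[k1 k2].
    have yka : a <= yk := le_trans h1' k1.
    have ykb : yk <= b := le_trans k2 h2'.
    have eyk : yk = y0.
      apply: Ginj; first by rewrite inE /= in_itv /= yka ykb.
        by rewrite inE /= in_itv /= y0a y0b.
      by rewrite ek e0'.
    have : `|y0 - x| <= k.+1%:R^-1.
      rewrite ler_distl -eyk; apply/andP; split.
        by apply: le_trans k1; rewrite le_max lexx orbT.
      by apply: le_trans k2 _; rewrite ge_min lexx orbT.
    by rewrite leNgt hk.
  move=> -> n _; exists x => //=; rewrite in_itv /=.
  rewrite ge_max le_min ax xb /= gerBl lerDl invr_ge0 ler0n //.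
have homo : {homo Fs x : n m / (n <= m)%N >-> (m <= n)%O}.
  move=> n m nm; apply/subsetPset; rewrite /Fs; apply: subI.
    rewrite ge_max !le_max lexx /=; apply/orP; right.
    by rewrite lerB // lef_pV2 ?posrE ?ltr0n // ler_nat.
  rewrite le_min !ge_min lexx /=; apply/orP; right.
  by rewrite lerD // lef_pV2 ?posrE ?ltr0n // ler_nat.
have fin0 : (mu (Fs x 0%N) < +oo)%E.
  by have [h1 h2] := Fs_ab x 0%N; exact: finM.
have mcap : measurable (\bigcap_n Fs x n : set (Borel X)).
  rewrite capE; have -> : [set G x] = G @` `[x, x] by rewrite set_itv1 image_set1.
  exact: mimg.
have cv := nonincreasing_cvg_mu fin0 mF mcap homo.
rewrite capE mu0 in cv.
have nb : nbhs (0%R%:E) [set y : \bar R | (y < e%:E)%E].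
  by apply: (@nbhs_open_ereal_lt _ 0 (fun=> e)).
have [i _ Hi] := cv _ nb.
by exists i; apply: (Hi i) => /=.
Qed.


Lemma nuv_le x y : a <= x -> x <= y -> y <= b -> nuv x <= nuv y.
Proof.
move=> ax; rewrite le_eqVlt => /orP[/eqP -> //|xy] yb.
exact: ltW (nuv_lt ax xy yb).
Qed.

Lemma finN c d : a <= c -> d <= b -> M c d \is a fin_num.
Proof. by move=> h1 h2; rewrite ge0_fin_numE ?M0 //; exact: finM. Qed.

Lemma key_sec (f : X -> R) (ac : abs_cont 0 (hgt mu g) (f \o gamma_h mu g))
  t (at_ : a <= t) (tb : t <= b) (ft : f (G t) <> 0) :
  exists c d, [/\ a <= c, c < d, d <= b &
      forall y, c <= y <= d -> f (G y) <> 0].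
Proof.
have e0 : 0 < `|f (G t)| by rewrite normr_gt0; apply/eqP.
have [dl dl0 Hdl] := ac _ e0.
have [n hn] := small at_ tb dl0.
have [ca db] := Fs_ab t n.
set r := n.+1%:R^-1 in ca db hn.
set c := Num.max a (t - r) in ca hn.
set d := Num.min b (t + r) in db hn.
have r0 : 0 < r by rewrite /r invr_gt0 ltr0n.
have ct : c <= t by rewrite /c ge_max at_ gerBl ltW.
have td : t <= d by rewrite /d le_min tb lerDl ltW.
have Mcd : fine (M c d) < dl.
  by rewrite -lte_fin fineK //; exact: finN.
have gen : forall u v, c <= u -> u <= v -> v <= d ->
    `|f (G v) - f (G u)| < `|f (G t)|.
  move=> u v cu uv vd.
  have au := le_trans ca cu.
  have vb := le_trans vd db.
  have nuvuv := nuv_le au uv vb.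
  have := Hdl 1%N (fun=> (nuv u, nuv v)).
  rewrite !big_ord1 /= !gh_nuv //; [|exact: le_trans uv vb|exact: le_trans au uv].
  apply.
  - move=> _ /=; split; first exact: nuv_ge0.
    by split => //; rewrite hgtE; exact: nuv_le (le_trans au uv) vb (lexx b).
  - by move=> i j; rewrite !ord1.
  - apply: le_lt_trans Mcd.
    rewrite lerBlDl.
    apply: le_trans (nuv_sub au uv vb) _; rewrite lerD2l.
    apply: fine_le; [exact: finN au vb|exact: finN ca db|].
    apply: le_measure; rewrite ?inE; [exact: mimg au vb|exact: mimg|].
    exact: subI.
exists c, d; split => //.
  rewrite /c /d gt_max !lt_min ab /=; apply/andP; split.
    by apply: le_lt_trans at_ _; rewrite ltrDl.
  apply/andP; split; first by apply: lt_le_trans tb; rewrite gtrBl.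
  by rewrite ltrBlDr -addrA ltrDl addr_gt0.
move=> y /andP[cy yd] fy.
case: (leP t y) => hty.
  by move: (gen t y ct hty yd); rewrite fy sub0r normrN ltxx.
by move: (gen y t cy (ltW hty) td); rewrite fy subr0 ltxx.
Qed.

End Curve.
Unset Implicit Arguments. Set Strict Implicit.
Theorem lemma3p7 (R : realType) (X : pseudoPMetricType R)
  (hX : hausdorff_space X)
  (mu m : {measure set (Borel X) -> \bar R})
  (mu_nonatomic : forall x : X, mu [set x] = 0%E)
  (p : R) (hp : 0 < p) (f : X -> R)
  (hf : ACC p mu m f)
  (hf0 : {ae m, forall x : Borel X, f x = 0}) :
  Mod p mu m
    [set g : cpath | GammaMu mu g /\
       exists t, pa g <= t <= pb g /\ f (pf g t) <> 0] = 0%E.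
Proof.
have [N [mN mN0 sN]] := hf0.
case: hf => Gam0 [sub0 [mod0 acc]].
apply/eqP; rewrite eq_le; apply/andP; split; last first.
  by apply/ereal_infP => y [g _ <-]; apply: integral_ge0 => x _; exact: poweR_ge0.
rewrite -mod0; apply: le_ereal_inf => z [g0 [mg0 [g0ge0 g0ad]] <-].
pose g1 := fun x : Borel X => (+oo * (\1_N x : R)%:E)%E.
have mg1 : measurable_fun setT g1.
  apply: measurable_funeM; apply/measurable_EFinP; exact: measurable_indic.
have g1ge0 : forall x, (0 <= g1 x)%E.
  by move=> x; rewrite /g1 mule_ge0 // lee_fin indicE.
have mImg : forall gam, GammaMu mu gam -> measurable (Defs.Im gam : set (Borel X)).
  by move=> gam [_ [cg _]]; apply: img_meas.
exists (g0 \+ g1)%E.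
  split; first exact: emeasurable_funD.
  split; first by move=> x; rewrite adde_ge0.
  move=> gam [Ggam [t [ht ft]]].
  have mI := mImg _ Ggam.
  have mIS : forall h : Borel X -> \bar R, measurable_fun setT h ->
    measurable_fun (Defs.Im gam : set (Borel X)) h by move=> h mh; exact: measurable_funTS.
  case: (pselect (Gam0 gam)) => G0.
    apply: (le_trans (g0ad _ G0)).
    apply: (ge0_le_integral mu mI (fun x _ => g0ge0 x) (mIS _ mg0)).
    - by apply: mIS; exact: emeasurable_funD.
    - by move=> x _; exact: leeDl.
  have [c [d [ac cd db fcd]]] := key_sec hX mu_nonatomic Ggam (acc _ Ggam G0) (proj1 (andP ht)) (proj2 (andP ht)) ft.
  have mcd := @img_meas _ _ hX gam c d (proj1 (proj2 Ggam)) ac db.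
  have pos : (0 < mu (pf gam @` `[c, d]))%E.
    by case: Ggam => _ [_ [_ H]]; case/andP: (H c d ac cd db).
  suff -> : line_int mu gam (g0 \+ g1)%E = +oo%E by rewrite leey.
  apply/eqP; rewrite eq_le leey /=.
  have sub : pf gam @` `[c, d] `<=` Defs.Im gam.
    move=> _ [y /= hy <-]; exists y => //=.
    move: hy; rewrite !in_itv /= => /andP[h1 h2].
    by rewrite (le_trans ac h1) (le_trans h2 db).
  apply: (@le_trans _ _ (\int[mu]_(x in Defs.Im gam) g1 x)%E); last first.
    apply: (ge0_le_integral mu mI (fun x _ => g1ge0 x) (mIS _ mg1)).
    - by apply: mIS; exact: emeasurable_funD.
    - by move=> x _; exact: leeDr.
  apply: (@le_trans _ _ (\int[mu]_(x in pf gam @` `[c, d]) g1 x)%E); last first.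
    exact: (ge0_subset_integral mu mcd mI (mIS _ mg1) (fun x _ => g1ge0 x) sub).
  rewrite (eq_integral (cst +oo%E)); last first.
    move=> x; rewrite inE => -[y hy <-].
    have Ny : N (pf gam y).
      apply: sN => /= h; apply: (fcd y) => //.

    by rewrite /g1 indicE mem_set // mule1.
  by rewrite integral_cst // gt0_mulye.
apply: (@ae_eq_integral _ _ _ m setT (fun x => g0 x `^ p)%E
  (fun x => (g0 x + g1 x) `^ p)%E measurableT).
- exact: (measurableT_comp (measurable_poweR p) (emeasurable_funD mg0 mg1)).
- exact: (measurableT_comp (measurable_poweR p) mg0).
- exists N; split => // x /= hx; apply: contra_notP hx => Nx _.
  by rewrite /g1 indicE memNset // mule0 adde0.
Qed.
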